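(* Fix $\eta>0$, let $\mu\in\mathbb{L}_2$ and $\lambda\in\mathbb{R}^{2md}$, and let $\delta=\max_{e\in E,i\in e}\|\nu^\lambda_{e,i}\|_1$. Then there exists $\hat\mu$ in the slack polytope $\mathbb{L}_2^{\nu^\lambda}$ such that $$\|\mu-\hat\mu\|_1\le16(m+n)d\delta+2\sum_{e\in E,i\in e}\|\nu^\lambda_{e,i}\|_1.$$
   Context: Let $G=(V,E)$ be a finite undirected graph with $n=|V|$, $m=|E|$, every vertex incident to at least one edge; $N_i=\{e\in E:i\in e\}$. $\chi$ is a finite label set with $d=|\chi|\ge2$. Costs $C_i\in\mathbb{R}^\chi$, $C_e\in\mathbb{R}^{\chi^2}$; for $e=\{i,j\}$, $x_e=(x_i,x_j)$, $(x_e)_i=x_i$. For $\mu=((\mu_i)_{i\in V},(\mu_e)_{e\in E})$, $\|\mu\|_1$ is the sum of absolute values of all entries. $\mathbb{L}_2=\{\mu\ge0:\mu_i\in\Sigma^d\ \forall i,\ \sum_{x_e:(x_e)_i=x}\mu_e(x_e)=\mu_i(x)\ \forall e,\,i\in e,\,x\}$, $\Sigma^d$ the probability simplex on $\chi$. For a vector $\nu=(\nu_{e,i})_{e\in E,i\in e}$, $\nu_{e,i}\in\mathbb{R}^\chi$, the slack polytope is $\mathbb{L}_2^\nu=\{\mu\ge0:\mu_i\in\Sigma^d\ \forall i,\ \sum_{x_e:(x_e)_i=x}\mu_e(x_e)=\mu_i(x)+\nu_{e,i}(x)\ \forall e,\,i\in e,\,x\}$. For $\lambda\in\mathbb{R}^{2md}$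 (indexed by $(e,i,x)$): $\mu^\lambda_i(x)\propto\exp(-\eta C_i(x)+\eta\sum_{e\in N_i}\lambda_{e,i}(x))$, $\mu^\lambda_e(x_e)\propto\exp(-\eta C_e(x_e)-\eta\sum_{i\in e}\lambda_{e,i}((x_e)_i))$, each normalized; $S^\lambda_{e,i}(x)=\sum_{x_e:(x_e)_i=x}\mu^\lambda_e(x_e)$; slack $\nu^\lambda_{e,i}=S^\lambda_{e,i}-\mu^\lambda_i$. *)

(* Defs.v *)
From HB Require Import structures.
From mathcomp Require Import all_boot all_order all_algebra.
From mathcomp Require Import reals.
From mathcomp Require Import sequences exp.
Set Implicit Arguments. Unset Strict Implicit. Unset Printing Implicit Defensive.
Import Order.TTheory GRing.Theory Num.Theory.
Local Open Scope ring_scope.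

(* Graph encoding: vertices V : finType, edges E : finType, each edge e has
   two endpoints [ends e false] and [ends e true]; the pair (e, b) encodes
   "i in e" with i = ends e b.  A labelling x_e of edge e is a pair
   (x, y) : chi * chi with x the label of [ends e false] and y that of
   [ends e true]. *)

Section Defs.
Variables (R : realType) (V chi E : finType) (ends : E -> bool -> V).

Definition simple_graph : Prop :=
  (forall e, ends e false != ends e true) /\
  (forall e e', [set ends e false; ends e true] = [set ends e' false; ends e' true] -> e = e').

Definition no_isolated : Prop := forall i : V, exists e b, ends e b = i.

Definition proj (b : bool) (xe : chi * chi) : chi := if b then xe.2 else xe.1.

Definition marg (muE : E -> chi -> chi -> R) (e : E) (b : bool) (x : chi) : R :=
  \sum_(xe : chi * chi | proj b xe == x) muE e xe.1 xe.2.

Definition in_L2nu (nu : E -> bool -> chi -> R)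
    (muV : V -> chi -> R) (muE : E -> chi -> chi -> R) : Prop :=
  [/\ forall i x, 0 <= muV i x,
      forall e x y, 0 <= muE e x y,
      forall i, \sum_x muV i x = 1 &
      forall e b x, marg muE e b x = muV (ends e b) x + nu e b x].

Definition in_L2 muV muE : Prop := in_L2nu (fun _ _ _ => 0) muV muE.

Definition norm1 (muV : V -> chi -> R) (muE : E -> chi -> chi -> R) : R :=
  \sum_i \sum_x `|muV i x| + \sum_e \sum_(xe : chi * chi) `|muE e xe.1 xe.2|.

Variables (eta : R) (CV : V -> chi -> R) (CE : E -> chi -> chi -> R)
  (lam : E -> bool -> chi -> R).

Definition wV (i : V) (x : chi) : R :=
  expR (- eta * CV i x + eta * \sum_(p : E * bool | ends p.1 p.2 == i) lam p.1 p.2 x).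

Definition muV_lam (i : V) (x : chi) : R := wV i x / \sum_x' wV i x'.

Definition wE (e : E) (x y : chi) : R :=
  expR (- eta * CE e x y - eta * (lam e false x + lam e true y)).

Definition muE_lam (e : E) (x y : chi) : R :=
  wE e x y / \sum_(xe : chi * chi) wE e xe.1 xe.2.

Definition nu_lam (e : E) (b : bool) (x : chi) : R :=
  marg muE_lam e b x - muV_lam (ends e b) x.

Definition nu_norm (e : E) (b : bool) : R := \sum_x `|nu_lam e b x|.

Definition delta_lam : R := \big[Num.max/0]_(p : E * bool) nu_norm p.1 p.2.

End Defs.

(* Main.v *)
Require Import Defs.
From HB Require Import structures.
From mathcomp Require Import all_boot all_order all_algebra.
From mathcomp Require Import reals.
From mathcomp Require Import sequences exp.
From mathcomp.algebra_tactics Require Import ring lra.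
Import Order.TTheory GRing.Theory Num.Theory.
Local Open Scope ring_scope.

Section H.
Variables (R : realType) (chi : finType).

Lemma sum_pair (F : chi -> chi -> R) :
  \sum_(xe : chi * chi) F xe.1 xe.2 = \sum_x \sum_y F x y.
Proof. by rewrite pair_bigA. Qed.

Lemma margF (E : finType) (F : E -> chi -> chi -> R) e x :
  marg F e false x = \sum_y F e x y.
Proof.
rewrite /marg.
rewrite (eq_bigl (fun xe : chi * chi => (xe.1 == x) && true)); last first.
  by move=> [a b] /=; rewrite andbT.
by rewrite -(pair_big_dep (fun i => i == x) (fun _ _ => true) (fun i j => F e i j)) /= big_pred1_eq.
Qed.

Lemma margT (E : finType) (F : E -> chi -> chi -> R) e x :
  marg F e true x = \sum_y F e y x.
Proof.
rewrite /marg.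
rewrite (eq_bigl (fun xe : chi * chi => true && (xe.2 == x))); last first.
  by move=> [a b] /=.
rewrite -(pair_big_dep (fun _ => true) (fun i j => j == x) (fun i j => F e i j)) /=.
by apply: eq_bigr => i _; rewrite big_pred1_eq.
Qed.

Lemma sum_marg (E : finType) (F : E -> chi -> chi -> R) e b :
  \sum_x marg F e b x = \sum_(xe : chi * chi) F e xe.1 xe.2.
Proof.
rewrite sum_pair; case: b.
  rewrite (eq_bigr _ (fun x _ => @margT E F e x)) exchange_big //.
by rewrite (eq_bigr _ (fun x _ => @margF E F e x)).
Qed.


Lemma term_le_sum (I : finType) (F : I -> R) (i : I) : (forall j, 0 <= F j) -> F i <= \sum_j F j.
Proof. by move=> H; rewrite (bigD1 i) //= lerDl sumr_ge0. Qed.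

Lemma sum_pos (I : finType) (F : I -> R) (i : I) : (forall j, 0 < F j) -> 0 < \sum_j F j.
Proof.
move=> H; rewrite (bigD1 i) //=; apply: (lt_le_trans (H i)).
by rewrite lerDl sumr_ge0 // => j _; apply/ltW.
Qed.

Lemma absB_le (a b : R) : 0 <= a -> 0 <= b -> `|a - b| <= a + b.
Proof. by move=> ha hb; rewrite ler_norml; apply/andP; split; lra. Qed.

Lemma norm1_le (V E : finType) (fV : V -> chi -> R) (fE : E -> chi -> chi -> R) c :
  (forall i, \sum_x `|fV i x| <= c) ->
  (forall e, \sum_(xe : chi * chi) `|fE e xe.1 xe.2| <= c) ->
  norm1 fV fE <= c * (#|E| + #|V|)%:R.
Proof.
move=> hV hE; rewrite /norm1 natrD mulrDr [c * _ + _]addrC.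
apply: lerD.
  apply: (@le_trans _ _ (\sum_(i : V) c)); first by apply: ler_sum => i _; exact: hV.
  by rewrite sumr_const mulr_natr.
apply: (@le_trans _ _ (\sum_(i : E) c)); first by apply: ler_sum => i _; exact: hE.
by rewrite sumr_const mulr_natr.
Qed.

End H.

Theorem lemma6 (R : realType) (V chi E : finType) (ends : E -> bool -> V)
  (Hsimple : simple_graph ends) (Hinc : no_isolated ends)
  (Hd : (2 <= #|chi|)%N)
  (CV : V -> chi -> R) (CE : E -> chi -> chi -> R)
  (eta : R) (Heta : 0 < eta)
  (muV : V -> chi -> R) (muE : E -> chi -> chi -> R)
  (Hmu : in_L2 ends muV muE)
  (lam : E -> bool -> chi -> R) :
  exists (hV : V -> chi -> R) (hE : E -> chi -> chi -> R),
    in_L2nu ends (nu_lam ends eta CV CE lam) hV hE /\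
    norm1 (fun i x => muV i x - hV i x) (fun e x y => muE e x y - hE e x y)
      <= 16 * ((#|E| + #|V|)%:R) * (#|chi|%:R) * delta_lam ends eta CV CE lam
         + 2 * \sum_(e : E) \sum_(b : bool) nu_norm ends eta CV CE lam e b.
Proof.
have [x0 _] : exists x0 : chi, true.
  by case: (pickP chi) => [x _|/eq_card0 h]; [exists x| move: Hd; rewrite h].
set nu := nu_lam ends eta CV CE lam.
set dl := delta_lam ends eta CV CE lam.
set d : R := #|chi|%:R.
have d_gt0 : 0 < d by rewrite ltr0n; apply: leq_trans Hd.
have nuN_ge0 : forall e b, 0 <= nu_norm ends eta CV CE lam e b.
  by move=> e b; apply: sumr_ge0 => x _.
have dl_ge0 : 0 <= dl.
  rewrite /dl /delta_lam; elim/big_ind: _ => //.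
  by move=> a b ha hb; rewrite le_max ha.
have nuN_le : forall e b, nu_norm ends eta CV CE lam e b <= dl.
  by move=> e b; exact: (le_bigmax 0 (fun p : E * bool => nu_norm ends eta CV CE lam p.1 p.2) (e, b)).
have nu_le : forall e b x, `|nu e b x| <= dl.
  move=> e b x; apply: le_trans (nuN_le e b).
  by rewrite /nu_norm; apply: (@term_le_sum R chi (fun x => `|nu e b x|) x).
set mV := muV_lam ends eta CV lam.
set mE := muE_lam eta CE lam.
have wV_gt0 : forall i x, 0 < wV ends eta CV lam i x by move=> i x; apply: expR_gt0.
have wE_gt0 : forall e x y, 0 < wE eta CE lam e x y by move=> *; apply: expR_gt0.
have mV_ge0 : forall i x, 0 <= mV i x.
  move=> i x; rewrite /mV /muV_lam; apply: divr_ge0; first exact/ltW.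
  by apply: sumr_ge0 => j _; apply/ltW.
have mE_ge0 : forall e x y, 0 <= mE e x y.
  move=> e x y; rewrite /mE /muE_lam; apply: divr_ge0; first exact/ltW.
  by apply: sumr_ge0 => j _; apply/ltW.
have mV_sum : forall i, \sum_x mV i x = 1.
  move=> i; rewrite /mV /muV_lam -mulr_suml divff // gt_eqF //.
  exact: (@sum_pos R chi _ x0).
have mE_sum : forall e, \sum_(xe : chi * chi) mE e xe.1 xe.2 = 1.
  move=> e; rewrite /mE /muE_lam -mulr_suml divff // gt_eqF //.
  exact: (@sum_pos R _ _ (x0, x0)).
have nu_sum : forall e b, \sum_x nu e b x = 0.
  move=> e b; rewrite /nu /nu_lam sumrB sum_marg.
  by rewrite -/mE -/mV mE_sum mV_sum subrr.

case: Hmu => muV0 muE0 muVs muM.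
set S := \sum_(e : E) \sum_(b : bool) nu_norm ends eta CV CE lam e b.
have S_ge0 : 0 <= S.
  by apply: sumr_ge0 => e _; apply: sumr_ge0 => b _.
set N : R := (#|E| + #|V|)%:R.
have N_ge0 : 0 <= N by [].
set s := d * dl.
have s_ge0 : 0 <= s by apply: mulr_ge0 => //; apply: ltW.
have [hs|hs] := leP 1 s.
  exists mV, mE; split.
    split => // e b x; rewrite /nu /nu_lam -/mE -/mV.
    by rewrite addrC subrK.
  apply: (le_trans (@norm1_le R chi V E _ _ 2 _ _)).
  - move=> i; apply: (le_trans (y := \sum_x (muV i x + mV i x))).
      by apply: ler_sum => x _; apply: absB_le.
    by rewrite big_split /= muVs mV_sum.
  - move=> e; apply: (le_trans (y := \sum_(xe : chi * chi) (muE e xe.1 xe.2 + mE e xe.1 xe.2))).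
      by apply: ler_sum => x _; apply: absB_le.
    rewrite big_split /= mE_sum -(@sum_marg R chi E muE e false).
    rewrite (eq_bigr (fun x => muV (ends e false) x)); last by move=> x _; rewrite muM addr0.
    by rewrite muVs.
  have h1 : N <= N * s by rewrite -{1}(mulr1 N) ler_wpM2l.
  have -> : 16 * N * d * dl = 16 * (N * s) by rewrite /s; ring.
  have hN : (#|E| + #|V|)%:R = N by []. rewrite hN. move: h1; set t := N * s => h1. lra.

have dl0 : s = 0 -> forall e b x, nu e b x = 0.
  move=> /eqP; rewrite mulf_eq0 (gt_eqF d_gt0) /= => /eqP dl0 e b x.
  by apply/eqP; rewrite -normr_le0 -dl0.
set A := fun e b x => dl + nu e b x.
have A_ge0 : forall e b x, 0 <= A e b x.
  move=> e b x; rewrite /A; have := nu_le e b x; rewrite ler_norml => /andP[h _].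
  lra.
have A_sum : forall e b, \sum_x A e b x = s.
  move=> e b; rewrite /A big_split /= nu_sum addr0 sumr_const -mulr_natr mulrC.
  by [].
have Ak : forall e b x, s^-1 * s * A e b x = A e b x.
  move=> e b x; have [s0|s0] := eqVneq s 0.
    rewrite /A dl0 // s0 mulr0 mul0r addr0; move: s0 => /eqP; rewrite mulf_eq0 (gt_eqF d_gt0) /= => /eqP ->; by [].
  by rewrite mulVf // mul1r.
have sss : s^-1 * s * s = s.
  have [s0|s0] := eqVneq s 0; first by rewrite s0 mulr0.
  by rewrite mulVf // mul1r.
exists (fun i x => (1 - s) * muV i x + dl).
exists (fun e x y => (1 - s) * muE e x y + s^-1 * A e false x * A e true y).
split.
  split.
  - move=> i x; apply: addr_ge0 => //; apply: mulr_ge0 => //; lra.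
  - move=> e x y; apply: addr_ge0; first by apply: mulr_ge0 => //; lra.
    by apply: mulr_ge0; [apply: mulr_ge0 => //; rewrite invr_ge0|].
  - move=> i; rewrite big_split /= -mulr_sumr muVs sumr_const -mulr_natr.
    by rewrite /s /d; ring.
  - move=> e [|] x.
    + rewrite margT big_split /= -mulr_sumr -mulr_suml -mulr_sumr A_sum.
      rewrite -(@margT R chi E muE) muM addr0 Ak /A; ring.
    + rewrite margF big_split /= -mulr_sumr -mulr_sumr A_sum.
      rewrite -(@margF R chi E muE) muM addr0 [s^-1 * _ * _]mulrAC Ak /A; ring.
apply: (le_trans (@norm1_le R chi V E _ _ (2 * s) _ _)).
- move=> i; apply: (le_trans (y := \sum_x (s * muV i x + dl))).
    apply: ler_sum => x _.
    have -> : muV i x - ((1 - s) * muV i x + dl) = s * muV i x - dl by ring.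
    by apply: absB_le => //; apply: mulr_ge0.
  rewrite big_split /= -mulr_sumr muVs sumr_const -mulr_natr.
  by rewrite /s /d mulr1; lra.

- move=> e; apply: (le_trans (y := \sum_(xe : chi * chi) (s * muE e xe.1 xe.2 + s^-1 * A e false xe.1 * A e true xe.2))).
    apply: ler_sum => x _.
    have -> : forall a b : R, a - ((1 - s) * a + b) = s * a - b by move=> a b; ring.
    apply: absB_le; first by apply: mulr_ge0.
    by apply: mulr_ge0; [apply: mulr_ge0 => //; rewrite invr_ge0|].
  rewrite big_split /= -mulr_sumr -(@sum_marg R chi E muE e false).
  rewrite (eq_bigr (fun x => muV (ends e false) x)); last by move=> x _; rewrite muM addr0.
  rewrite muVs (@sum_pair R chi (fun a b => s^-1 * A e false a * A e true b)).
  rewrite (eq_bigr (fun x => s^-1 * A e false x * s)); last first.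
    by move=> x _; rewrite -mulr_sumr A_sum.
  rewrite -mulr_suml -mulr_sumr A_sum mulrAC sss mulr1 -/s; lra.
have hN : (#|E| + #|V|)%:R = N by [].
rewrite hN.
have -> : 16 * N * d * dl = 8 * (2 * s * N) by rewrite /s; ring.
have : 0 <= 2 * s * N by apply: mulr_ge0 => //; lra.
move: (2 * s * N) => t ht; lra.
Qed.
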